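(* Let $\psi=(N,h):\Sigma\to\mathbb{H}^2\times\mathbb{R}$ be a conformal immersion with regular vertical projection which, with respect to its canonical orientation ($u>0$), has constant mean curvature $H=1/2$. Then its hyperbolic Gauss map $G:\Sigma\to\mathbb{H}^2$ is harmonic, and $\langle G_z,G_z\rangle=-Q$, where $Q\,dz^2$ is the Abresch–Rosenberg differential of $\psi$.
   Context: $\mathbb{L}^4$ is $\mathbb{R}^4$ with metric $\langle,\rangle=-dx_0^2+dx_1^2+dx_2^2+dx_3^2$, $\mathbb{L}^3$ the subspace of the first three coordinates, $\mathbb{H}^2=\{x\in\mathbb{L}^3:\langle x,x\rangle=-1,x_0>0\}$, and $\mathbb{H}^2\times\mathbb{R}\subset\mathbb{L}^4$. A surface is a conformal immersion $\psi=(N,h):\Sigma\to\mathbb{H}^2\times\mathbb{R}$ of a connected Riemann surface, with $N:\Sigma\to\mathbb{H}^2$ (vertical projection), $h:\Sigma\to\mathbb{R}$ (height function, assumed not locally constant), induced metric $\lambda|dz|^2$ for a local conformal parameter $z$. Its unit normal $\eta=(\hat N,u)$ is the unit vector field in $\mathbb{L}^4$ orthogonal to $\psi_z,\psi_{\bar z}$ and to $N$ (i.e. normal to $\psi$ and tangent to $\mathbb{H}^2\times\mathbb{R}$); $u$ is the angle function. The Hopf differential is $p\,dz^2=-\langle\psi_z,\eta_z\rangle dz^2$, $H$ is the mean curvature, and the Abresch–Rosenberg differential is $Q\,dz^2$ with $Q=2Hp+h_z^2$. $\psi$ has regular vertical projection if $dN$ is an isomorphism everywhere, equivalently $u$ never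 vanishes; such a surface is canonically oriented so that $u>0$. Its hyperbolic Gauss map is the map $G:\Sigma\to\mathbb{H}^2$ defined by $(G,1)=\frac1u(\eta+N)$ (this vector lies in the future light cone and has last coordinate $1$). *)

(* Defs.v *)
From Stdlib Require Import Reals List.
From Coquelicot Require Import Coquelicot.
Open Scope R_scope.

(* A point of R^4 = L^4 (or of L^3, using coordinates 0,1,2) is a coordinate
   function nat -> R; only coordinates 0..3 are ever read. *)
Definition vec := nat -> R.
Definition lor3 (v w : vec) : R := - v 0%nat * w 0%nat + v 1%nat * w 1%nat + v 2%nat * w 2%nat.
Definition lor4 (v w : vec) : R := lor3 v w + v 3%nat * w 3%nat.

Definition dx (f : R -> R -> vec) : R -> R -> vec :=
  fun x y i => Derive (fun t => f t y i) x.
Definition dy (f : R -> R -> vec) : R -> R -> vec :=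
  fun x y i => Derive (fun t => f x t i) y.
Definition lap (f : R -> R -> vec) : R -> R -> vec :=
  fun x y i => dx (dx f) x y i + dy (dy f) x y i.

Definition cvec := nat -> C.
Definition lor3C (v w : cvec) : C :=
  (- (v 0%nat * w 0%nat) + v 1%nat * w 1%nat + v 2%nat * w 2%nat)%C.
Definition lor4C (v w : cvec) : C := (lor3C v w + v 3%nat * w 3%nat)%C.
Definition dz (f : R -> R -> vec) (x y : R) : cvec :=
  fun i => (RtoC (/2) * (RtoC (dx f x y i) - Ci * RtoC (dy f x y i)))%C.

Fixpoint pd (l : list bool) (f : R -> R -> R) : R -> R -> R :=
  match l with
  | nil => f
  | b :: l' => let g := pd l' f in
      if b then fun x y => Derive (fun t => g t y) x
      else fun x y => Derive (fun t => g x t) y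
  end.

Definition smooth_on (Om : R -> R -> Prop) (f : R -> R -> R) : Prop :=
  forall (l : list bool) (x y : R), Om x y ->
    ex_derive (fun t => pd l f t y) x /\ ex_derive (fun t => pd l f x t) y /\
    continuous (fun p : R * R => pd l f (fst p) (snd p)) (x, y).

Definition smooth_vec_on (n : nat) (Om : R -> R -> Prop) (f : R -> R -> vec) : Prop :=
  forall i, (i < n)%nat -> smooth_on Om (fun x y => f x y i).

Definition open2 (U : R -> R -> Prop) : Prop :=
  forall x y, U x y -> exists e, 0 < e /\
    forall x' y', (x' - x) ^ 2 + (y' - y) ^ 2 < e ^ 2 -> U x' y'.

Definition connected2 (Om : R -> R -> Prop) : Prop :=
  (exists x y, Om x y) /\
  forall A : R -> R -> Prop,
    open2 A -> open2 (fun x y => Om x y /\ ~ A x y) ->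
    (exists x y, Om x y /\ A x y) -> forall x y, Om x y -> A x y.

Definition not_locally_constant (Om : R -> R -> Prop) (h : R -> R -> R) : Prop :=
  forall U : R -> R -> Prop, open2 U -> (forall x y, U x y -> Om x y) ->
    (exists x y, U x y) ->
    ~ (exists c, forall x y, U x y -> h x y = c).

(* The immersion psi = (N, h) : Om -> H^2 x R  (N = coordinates 0..2, h = coordinate 3),
   conformal: <psi_x,psi_x> = <psi_y,psi_y> = lambda > 0, <psi_x,psi_y> = 0. *)
Definition conformal_immersion_H2xR (Om : R -> R -> Prop) (psi : R -> R -> vec) : Prop :=
  smooth_vec_on 4 Om psi /\
  forall x y, Om x y ->
    lor3 (psi x y) (psi x y) = -1 /\ 0 < psi x y 0%nat /\
    lor4 (dx psi x y) (dx psi x y) = lor4 (dy psi x y) (dy psi x y) /\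
    lor4 (dx psi x y) (dy psi x y) = 0 /\
    0 < lor4 (dx psi x y) (dx psi x y).

Definition lam (psi : R -> R -> vec) (x y : R) : R := lor4 (dx psi x y) (dx psi x y).

(* eta = (Nhat, u) is the unit normal of psi, tangent to H^2 x R
   (orthogonal to psi_x, psi_y and to (N,0)), with u = eta_3 > 0 everywhere:
   regular vertical projection with the canonical orientation. *)
Definition canonical_unit_normal (Om : R -> R -> Prop) (psi eta : R -> R -> vec) : Prop :=
  smooth_vec_on 4 Om eta /\
  forall x y, Om x y ->
    lor4 (eta x y) (dx psi x y) = 0 /\ lor4 (eta x y) (dy psi x y) = 0 /\
    lor3 (eta x y) (psi x y) = 0 /\ lor4 (eta x y) (eta x y) = 1 /\
    0 < eta x y 3%nat.

Definition meanH (psi eta : R -> R -> vec) (x y : R) : R :=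
  lor4 (lap psi x y) (eta x y) / (2 * lam psi x y).

Definition hopf (psi eta : R -> R -> vec) (x y : R) : C :=
  (- lor4C (dz psi x y) (dz eta x y))%C.

Definition abreschQ (psi eta : R -> R -> vec) (x y : R) : C :=
  (RtoC (2 * meanH psi eta x y) * hopf psi eta x y
   + dz psi x y 3%nat * dz psi x y 3%nat)%C.

(* Hyperbolic Gauss map: (G,1) = (eta + N)/u, i.e. G_i = (eta_i + N_i)/u, i = 0,1,2 *)
Definition hypGauss (psi eta : R -> R -> vec) : R -> R -> vec :=
  fun x y i => (eta x y i + psi x y i) / eta x y 3%nat.

(* Harmonic map into H^2 subset L^3: the tension field, i.e. the tangential part
   Delta G + <Delta G, G> G of the Laplacian, vanishes (conformal parameter). *)
Definition harmonic_H2 (Om : R -> R -> Prop) (G : R -> R -> vec) : Prop :=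
  forall x y, Om x y -> forall i, (i < 3)%nat ->
    lap G x y i + lor3 (lap G x y) (G x y) * G x y i = 0.

(* Main.v *)
Require Import Defs.
From Stdlib Require Import Reals Lra Lia List Nsatz.
From Coquelicot Require Import Coquelicot.
Open Scope R_scope.

Lemma pd_app l l' f : pd l (pd l' f) = pd (l ++ l') f.
Proof. induction l as [|b l IH]; simpl; auto. rewrite IH. reflexivity. Qed.

Lemma smooth_pd Om f l : smooth_on Om f -> smooth_on Om (pd l f).
Proof. intros Hs l' x y H. rewrite pd_app. apply Hs; auto. Qed.

Lemma open_ball Om x y : open2 Om -> Om x y ->
  exists d : posreal, forall a b, Rabs (a - x) < d -> Rabs (b - y) < d -> Om a b.
Proof.
  intros Ho H. destruct (Ho x y H) as [e [He Hb]].
  assert (Hd : 0 < e / 2) by lra. exists (mkposreal _ Hd). simpl.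
  intros a b Ha Hb'. apply Hb.
  rewrite <- (pow2_abs (a - x)), <- (pow2_abs (b - y)).
  pose proof (Rabs_pos (a - x)). pose proof (Rabs_pos (b - y)). nra.
Qed.

Lemma loc_x Om x y : open2 Om -> Om x y -> locally x (fun t => Om t y).
Proof.
  intros Ho H. destruct (open_ball Om x y Ho H) as [d Hd].
  exists d. intros t Ht. apply Hd. apply Ht. rewrite Rminus_diag, Rabs_R0. apply cond_pos.
Qed.

Lemma loc_y Om x y : open2 Om -> Om x y -> locally y (fun t => Om x t).
Proof.
  intros Ho H. destruct (open_ball Om x y Ho H) as [d Hd].
  exists d. intros t Ht. apply Hd. rewrite Rminus_diag, Rabs_R0. apply cond_pos. apply Ht.
Qed.

Lemma schwarz_Om Om f x y : open2 Om -> smooth_on Om f -> Om x y ->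
  Derive (fun t => Derive (fun s => f t s) y) x = Derive (fun t => Derive (fun s => f s t) x) y.
Proof.
  intros Ho Hs H. apply Schwarz.
  - destruct (open_ball Om x y Ho H) as [d Hd]. exists d. intros a b Ha Hb.
    pose proof (Hd a b Ha Hb) as Hab.
    destruct (Hs nil a b Hab) as [H1 [H2 _]].
    destruct (Hs (false :: nil) a b Hab) as [H3 _].
    destruct (Hs (true :: nil) a b Hab) as [_ [H4 _]].
    simpl in *. tauto.
  - destruct (Hs (true :: false :: nil) x y H) as [_ [_ Hc]].
    apply continuity_2d_pt_filterlim. exact Hc.
  - destruct (Hs (false :: true :: nil) x y H) as [_ [_ Hc]].
    apply continuity_2d_pt_filterlim. exact Hc.
Qed.

Lemma Dx_const Om (F : R -> R -> R) c x y : open2 Om -> Om x y ->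
  (forall a b, Om a b -> F a b = c) -> Derive (fun t => F t y) x = 0.
Proof.
  intros Ho H HF. rewrite (Derive_ext_loc _ (fun _ => c)). apply Derive_const.
  generalize (loc_x Om x y Ho H). apply filter_imp. intros t Ht. auto.
Qed.

Lemma Dy_const Om (F : R -> R -> R) c x y : open2 Om -> Om x y ->
  (forall a b, Om a b -> F a b = c) -> Derive (fun t => F x t) y = 0.
Proof.
  intros Ho H HF. rewrite (Derive_ext_loc _ (fun _ => c)). apply Derive_const.
  generalize (loc_y Om x y Ho H). apply filter_imp. intros t Ht. auto.
Qed.

Definition dfx (F : R -> R -> vec) x y := forall i, (i < 4)%nat -> ex_derive (fun t => F t y i) x.
Definition dfy (F : R -> R -> vec) x y := forall i, (i < 4)%nat -> ex_derive (fun t => F x t i) y.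

Lemma D_lor4_gen (a0 a1 a2 a3 b0 b1 b2 b3 : R -> R) x :
  ex_derive a0 x -> ex_derive a1 x -> ex_derive a2 x -> ex_derive a3 x ->
  ex_derive b0 x -> ex_derive b1 x -> ex_derive b2 x -> ex_derive b3 x ->
  is_derive (fun t => - a0 t * b0 t + a1 t * b1 t + a2 t * b2 t + a3 t * b3 t) x
   (- Derive a0 x * b0 x + Derive a1 x * b1 x + Derive a2 x * b2 x + Derive a3 x * b3 x
    + (- a0 x * Derive b0 x + a1 x * Derive b1 x + a2 x * Derive b2 x + a3 x * Derive b3 x)).
Proof.
  intros. auto_derive; [tauto|].
  change (fun t => a0 t) with a0; change (fun t => a1 t) with a1; change (fun t => a2 t) with a2; change (fun t => a3 t) with a3;
  change (fun t => b0 t) with b0; change (fun t => b1 t) with b1; change (fun t => b2 t) with b2; change (fun t => b3 t) with b3. ring.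
Qed.

Lemma D_lor3_gen (a0 a1 a2 b0 b1 b2 : R -> R) x :
  ex_derive a0 x -> ex_derive a1 x -> ex_derive a2 x ->
  ex_derive b0 x -> ex_derive b1 x -> ex_derive b2 x ->
  is_derive (fun t => - a0 t * b0 t + a1 t * b1 t + a2 t * b2 t) x
   (- Derive a0 x * b0 x + Derive a1 x * b1 x + Derive a2 x * b2 x
    + (- a0 x * Derive b0 x + a1 x * Derive b1 x + a2 x * Derive b2 x)).
Proof.
  intros. auto_derive; [tauto|].
  change (fun t => a0 t) with a0; change (fun t => a1 t) with a1; change (fun t => a2 t) with a2;
  change (fun t => b0 t) with b0; change (fun t => b1 t) with b1; change (fun t => b2 t) with b2. ring.
Qed.

Lemma Dx_lor4 F G x y : dfx F x y -> dfx G x y ->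
  Derive (fun t => lor4 (F t y) (G t y)) x = lor4 (dx F x y) (G x y) + lor4 (F x y) (dx G x y).
Proof.
  intros HF HG. unfold lor4, lor3, dx. apply is_derive_unique.
  apply (D_lor4_gen (fun t => F t y 0%nat) (fun t => F t y 1%nat) (fun t => F t y 2%nat) (fun t => F t y 3%nat)
     (fun t => G t y 0%nat) (fun t => G t y 1%nat) (fun t => G t y 2%nat) (fun t => G t y 3%nat));
  [apply HF|apply HF|apply HF|apply HF|apply HG|apply HG|apply HG|apply HG]; lia.
Qed.

Lemma isDx_lor4 F G x y : dfx F x y -> dfx G x y ->
  is_derive (fun t => lor4 (F t y) (G t y)) x (lor4 (dx F x y) (G x y) + lor4 (F x y) (dx G x y)).
Proof.
  intros HF HG. unfold lor4, lor3, dx.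
  apply (D_lor4_gen (fun t => F t y 0%nat) (fun t => F t y 1%nat) (fun t => F t y 2%nat) (fun t => F t y 3%nat)
     (fun t => G t y 0%nat) (fun t => G t y 1%nat) (fun t => G t y 2%nat) (fun t => G t y 3%nat));
  [apply HF|apply HF|apply HF|apply HF|apply HG|apply HG|apply HG|apply HG]; lia.
Qed.

Lemma isDy_lor4 F G x y : dfy F x y -> dfy G x y ->
  is_derive (fun t => lor4 (F x t) (G x t)) y (lor4 (dy F x y) (G x y) + lor4 (F x y) (dy G x y)).
Proof.
  intros HF HG. unfold lor4, lor3, dy.
  apply (D_lor4_gen (fun t => F x t 0%nat) (fun t => F x t 1%nat) (fun t => F x t 2%nat) (fun t => F x t 3%nat)
     (fun t => G x t 0%nat) (fun t => G x t 1%nat) (fun t => G x t 2%nat) (fun t => G x t 3%nat));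
  [apply HF|apply HF|apply HF|apply HF|apply HG|apply HG|apply HG|apply HG]; lia.
Qed.

Lemma isDx_lor3 F G x y : dfx F x y -> dfx G x y ->
  is_derive (fun t => lor3 (F t y) (G t y)) x (lor3 (dx F x y) (G x y) + lor3 (F x y) (dx G x y)).
Proof.
  intros HF HG. unfold lor3, dx.
  apply (D_lor3_gen (fun t => F t y 0%nat) (fun t => F t y 1%nat) (fun t => F t y 2%nat)
     (fun t => G t y 0%nat) (fun t => G t y 1%nat) (fun t => G t y 2%nat));
  [apply HF|apply HF|apply HF|apply HG|apply HG|apply HG]; lia.
Qed.

Lemma isDy_lor3 F G x y : dfy F x y -> dfy G x y ->
  is_derive (fun t => lor3 (F x t) (G x t)) y (lor3 (dy F x y) (G x y) + lor3 (F x y) (dy G x y)).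
Proof.
  intros HF HG. unfold lor3, dy.
  apply (D_lor3_gen (fun t => F x t 0%nat) (fun t => F x t 1%nat) (fun t => F x t 2%nat)
     (fun t => G x t 0%nat) (fun t => G x t 1%nat) (fun t => G x t 2%nat));
  [apply HF|apply HF|apply HF|apply HG|apply HG|apply HG]; lia.
Qed.

Lemma is_derive_const_loc_x Om (F : R -> R -> R) c x y l : open2 Om -> Om x y ->
  (forall a b, Om a b -> F a b = c) -> is_derive (fun t => F t y) x l -> l = 0.
Proof.
  intros Ho H HF Hd. rewrite <- (is_derive_unique _ _ _ Hd). eapply Dx_const; eauto.
Qed.

Lemma is_derive_const_loc_y Om (F : R -> R -> R) c x y l : open2 Om -> Om x y ->
  (forall a b, Om a b -> F a b = c) -> is_derive (fun t => F x t) y l -> l = 0.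
Proof.
  intros Ho H HF Hd. rewrite <- (is_derive_unique _ _ _ Hd). eapply Dy_const; eauto.
Qed.

Definition smv (Om : R -> R -> Prop) (F : R -> R -> vec) := smooth_vec_on 4 Om F.

Lemma smv_dfx Om F x y : smv Om F -> Om x y -> dfx F x y.
Proof. intros Hs H i Hi. destruct (Hs i Hi nil x y H) as [H1 _]. exact H1. Qed.

Lemma smv_dfy Om F x y : smv Om F -> Om x y -> dfy F x y.
Proof. intros Hs H i Hi. destruct (Hs i Hi nil x y H) as [_ [H1 _]]. exact H1. Qed.

Lemma smv_dx Om F : smv Om F -> smv Om (dx F).
Proof. intros Hs i Hi. exact (smooth_pd Om _ (true :: nil) (Hs i Hi)). Qed.

Lemma smv_dy Om F : smv Om F -> smv Om (dy F).
Proof. intros Hs i Hi. exact (smooth_pd Om _ (false :: nil) (Hs i Hi)). Qed.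

Lemma smv_schwarz Om F x y : open2 Om -> smv Om F -> Om x y ->
  forall i, (i < 4)%nat -> dy (dx F) x y i = dx (dy F) x y i.
Proof.
  intros Ho Hs H i Hi. unfold dx, dy.
  symmetry. exact (schwarz_Om Om (fun a b => F a b i) x y Ho (Hs i Hi) H).
Qed.

Definition det3 a b c d e f g h i := a*(e*i - f*h) - b*(d*i - f*g) + c*(d*h - e*g).
Definition det4 a0 a1 a2 a3 b0 b1 b2 b3 c0 c1 c2 c3 d0 d1 d2 d3 :=
  a0 * det3 b1 b2 b3 c1 c2 c3 d1 d2 d3 - a1 * det3 b0 b2 b3 c0 c2 c3 d0 d2 d3
  + a2 * det3 b0 b1 b3 c0 c1 c3 d0 d1 d3 - a3 * det3 b0 b1 b2 c0 c1 c2 d0 d1 d2.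

Lemma gram_vec (a b c d : vec) :
  det4 (lor4 a a) (lor4 a b) (lor4 a c) (lor4 a d)
       (lor4 b a) (lor4 b b) (lor4 b c) (lor4 b d)
       (lor4 c a) (lor4 c b) (lor4 c c) (lor4 c d)
       (lor4 d a) (lor4 d b) (lor4 d c) (lor4 d d)
  = - (det4 (a 0%nat) (a 1%nat) (a 2%nat) (a 3%nat) (b 0%nat) (b 1%nat) (b 2%nat) (b 3%nat)
            (c 0%nat) (c 1%nat) (c 2%nat) (c 3%nat) (d 0%nat) (d 1%nat) (d 2%nat) (d 3%nat))^2.
Proof. unfold det4, det3, lor4, lor3. ring. Qed.


Lemma cramer_zero a0 a1 a2 a3 b0 b1 b2 b3 c0 c1 c2 c3 d0 d1 d2 d3 s0 s1 s2 s3 :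
  a0*s0+a1*s1+a2*s2+a3*s3 = 0 -> b0*s0+b1*s1+b2*s2+b3*s3 = 0 ->
  c0*s0+c1*s1+c2*s2+c3*s3 = 0 -> d0*s0+d1*s1+d2*s2+d3*s3 = 0 ->
  det4 a0 a1 a2 a3 b0 b1 b2 b3 c0 c1 c2 c3 d0 d1 d2 d3 <> 0 ->
  s0 = 0 /\ s1 = 0 /\ s2 = 0 /\ s3 = 0.
Proof.
  intros Ha Hb Hc Hd Hdet.
  set (D := det4 a0 a1 a2 a3 b0 b1 b2 b3 c0 c1 c2 c3 d0 d1 d2 d3) in *.
  assert (E0 : D * s0 = det4 (a0*s0+a1*s1+a2*s2+a3*s3) a1 a2 a3 (b0*s0+b1*s1+b2*s2+b3*s3) b1 b2 b3
                             (c0*s0+c1*s1+c2*s2+c3*s3) c1 c2 c3 (d0*s0+d1*s1+d2*s2+d3*s3) d1 d2 d3)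
    by (unfold D, det4, det3; ring).
  assert (E1 : D * s1 = det4 a0 (a0*s0+a1*s1+a2*s2+a3*s3) a2 a3 b0 (b0*s0+b1*s1+b2*s2+b3*s3) b2 b3
                             c0 (c0*s0+c1*s1+c2*s2+c3*s3) c2 c3 d0 (d0*s0+d1*s1+d2*s2+d3*s3) d2 d3)
    by (unfold D, det4, det3; ring).
  assert (E2 : D * s2 = det4 a0 a1 (a0*s0+a1*s1+a2*s2+a3*s3) a3 b0 b1 (b0*s0+b1*s1+b2*s2+b3*s3) b3
                             c0 c1 (c0*s0+c1*s1+c2*s2+c3*s3) c3 d0 d1 (d0*s0+d1*s1+d2*s2+d3*s3) d3)
    by (unfold D, det4, det3; ring).
  assert (E3 : D * s3 = det4 a0 a1 a2 (a0*s0+a1*s1+a2*s2+a3*s3) b0 b1 b2 (b0*s0+b1*s1+b2*s2+b3*s3)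
                             c0 c1 c2 (c0*s0+c1*s1+c2*s2+c3*s3) d0 d1 d2 (d0*s0+d1*s1+d2*s2+d3*s3))
    by (unfold D, det4, det3; ring).
  rewrite Ha, Hb, Hc, Hd in E0, E1, E2, E3.
  unfold det4, det3 in E0, E1, E2, E3.
  repeat split; apply (Rmult_eq_reg_l D); auto; rewrite ?E0, ?E1, ?E2, ?E3; ring.
Qed.

Lemma frame_gen (a b c d v : vec) (l : R) :
  lor4 a a = l -> lor4 b b = l -> lor4 c c = 1 -> lor4 d d = -1 ->
  lor4 a b = 0 -> lor4 a c = 0 -> lor4 a d = 0 -> lor4 b c = 0 -> lor4 b d = 0 -> lor4 c d = 0 ->
  l <> 0 ->
  forall i, (i < 4)%nat ->
  v i = (lor4 v a * a i + lor4 v b * b i) / l + lor4 v c * c i - lor4 v d * d i.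
Proof.
  intros Haa Hbb Hcc Hdd Hab Hac Had Hbc Hbd Hcd Hl.
  assert (sym : forall p q, lor4 p q = lor4 q p) by (intros; unfold lor4, lor3; ring).
  set (r := fun i => v i - ((lor4 v a * a i + lor4 v b * b i) / l + lor4 v c * c i - lor4 v d * d i)).
  assert (Lr : forall w, lor4 r w = lor4 v w - ((lor4 v a * lor4 a w + lor4 v b * lor4 b w) / l
                          + lor4 v c * lor4 c w - lor4 v d * lor4 d w)).
  { intros w. unfold r, lor4, lor3. field. auto. }
  assert (ra : lor4 r a = 0) by (rewrite Lr, Haa, (sym b a), Hab, (sym c a), Hac, (sym d a), Had; field; auto).
  assert (rb : lor4 r b = 0) by (rewrite Lr, Hab, Hbb, (sym c b), Hbc, (sym d b), Hbd; field; auto).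
  assert (rc : lor4 r c = 0) by (rewrite Lr, Hac, Hbc, Hcc, (sym d c), Hcd; field; auto).
  assert (rd : lor4 r d = 0) by (rewrite Lr, Had, Hbd, Hcd, Hdd; field; auto).
  assert (Hdet : det4 (a 0%nat) (a 1%nat) (a 2%nat) (a 3%nat) (b 0%nat) (b 1%nat) (b 2%nat) (b 3%nat)
            (c 0%nat) (c 1%nat) (c 2%nat) (c 3%nat) (d 0%nat) (d 1%nat) (d 2%nat) (d 3%nat) <> 0).
  { intro H0. pose proof (gram_vec a b c d) as G.
    rewrite H0, Haa, Hbb, Hcc, Hdd, Hab, Hac, Had, Hbc, Hbd, Hcd, (sym b a), Hab, (sym c a), Hac,
      (sym d a), Had, (sym c b), Hbc, (sym d b), Hbd, (sym d c), Hcd in G.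
    unfold det4, det3 in G. apply Hl. nra. }
  assert (Z : forall w, lor4 r w = w 0%nat * (- r 0%nat) + w 1%nat * r 1%nat + w 2%nat * r 2%nat + w 3%nat * r 3%nat)
    by (intros; unfold lor4, lor3; ring).
  rewrite Z in ra, rb, rc, rd.
  destruct (cramer_zero (a 0%nat) (a 1%nat) (a 2%nat) (a 3%nat) (b 0%nat) (b 1%nat) (b 2%nat) (b 3%nat)
            (c 0%nat) (c 1%nat) (c 2%nat) (c 3%nat) (d 0%nat) (d 1%nat) (d 2%nat) (d 3%nat)
            (- r 0%nat) (r 1%nat) (r 2%nat) (r 3%nat) ra rb rc rd Hdet) as [s0 [s1 [s2 s3]]].
  intros i Hi. assert (Hr : r i = 0).
  { destruct i as [|[|[|[|i]]]]; try lia; auto; lra. }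
  unfold r in Hr. lra.
Qed.

Record c4 := C4 { k1 : R; k2 : R; k3 : R; k4 : R }.
Record sp := mkSP { lam_ : R; u_ : R; hx_ : R; hy_ : R; lx_ : R; ly_ : R; L_ : R; M_ : R }.

Definition ip s (a b : c4) := (k1 a * k1 b + k2 a * k2 b) / lam_ s + k3 a * k3 b - k4 a * k4 b.
Definition cmp3 s (a : c4) := (k1 a * hx_ s + k2 a * hy_ s) / lam_ s + k3 a * u_ s.
Definition l3 s a b := ip s a b - cmp3 s a * cmp3 s b.
Definition cadd a b := C4 (k1 a + k1 b) (k2 a + k2 b) (k3 a + k3 b) (k4 a + k4 b).
Definition csc r a := C4 (r * k1 a) (r * k2 a) (r * k3 a) (r * k4 a).
Definition cPx s := C4 (lam_ s) 0 0 0.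
Definition cPy s := C4 0 (lam_ s) 0 0.
Definition cE := C4 0 0 1 0.
Definition ce := C4 0 0 0 (-1).
Definition cE3 s := C4 (hx_ s) (hy_ s) (u_ s) 0.
Definition chat s a := cadd a (csc (- cmp3 s a) (cE3 s)).
Definition cPxx s := C4 (lx_ s / 2) (- ly_ s / 2) (L_ s) (- (lam_ s - hx_ s ^ 2)).
Definition cPxy s := C4 (ly_ s / 2) (lx_ s / 2) (M_ s) (hx_ s * hy_ s).
Definition cPyy s := C4 (- lx_ s / 2) (ly_ s / 2) (lam_ s - L_ s) (- (lam_ s - hy_ s ^ 2)).
Definition cEx s := C4 (- L_ s) (- M_ s) 0 (u_ s * hx_ s).
Definition cEy s := C4 (- M_ s) (- (lam_ s - L_ s)) 0 (u_ s * hy_ s).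
Definition cLP s := cadd (cPxx s) (cPyy s).
Definition cLE s := C4
  (-2 * ip s (cEx s) (cPxx s) - 2 * ip s (cEy s) (cPxy s) - lx_ s + ip s (cLP s) (cEx s))
  (-2 * ip s (cEx s) (cPxy s) - 2 * ip s (cEy s) (cPyy s) - ly_ s + ip s (cLP s) (cEy s))
  (- (ip s (cEx s) (cEx s) + ip s (cEy s) (cEy s)))
  (-2 * l3 s (cEx s) (cPx s) - 2 * l3 s (cEy s) (cPy s) - l3 s cE (cLP s)).
Definition cux s := cmp3 s (cEx s).
Definition cuy s := cmp3 s (cEy s).
Definition cLu s := cmp3 s (cLE s).
Definition cV s := let u := u_ s in
  cadd (csc (/ u) (cadd (cLE s) (chat s (cLP s))))
  (cadd (csc (-2 * cux s / u ^ 2) (cadd (cEx s) (chat s (cPx s))))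
  (cadd (csc (-2 * cuy s / u ^ 2) (cadd (cEy s) (chat s (cPy s))))
        (csc (- cLu s / u ^ 2 + 2 * (cux s ^ 2 + cuy s ^ 2) / u ^ 3) (cadd cE ce)))).
Definition cGx s := cadd (csc (/ u_ s) (cadd (cEx s) (chat s (cPx s)))) (csc (- cux s / u_ s ^ 2) (cadd cE ce)).
Definition cGy s := cadd (csc (/ u_ s) (cadd (cEy s) (chat s (cPy s)))) (csc (- cuy s / u_ s ^ 2) (cadd cE ce)).

Lemma fr_eq a b c d : b <> 0 -> d <> 0 -> a * d = c * b -> a / b = c / d.
Proof. intros Hb Hd H. unfold Rdiv. apply (Rmult_eq_reg_r (b * d)).
  - replace (a * / b * (b * d)) with (a * d) by (field; auto).
    replace (c * / d * (b * d)) with (c * b) by (field; auto). exact H.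
  - apply Rmult_integral_contrapositive_currified; auto. Qed.

Ltac nz := repeat (apply Rmult_integral_contrapositive_currified || apply pow_nonzero); auto; try lra.

Lemma div0 a b : b <> 0 -> a = 0 -> a / b = 0.
Proof. intros. subst. unfold Rdiv. ring. Qed.

Ltac sfin := apply Rminus_diag_uniq; field_simplify; [| nz..]; try (apply div0; [nz|]); cbv [pow] in *; nsatz.

Ltac scal := cbv [cV cGx cGy cadd csc chat cLE cLP cux cuy cLu l3 ip cmp3 cPx cPy cE ce cE3 cPxx cPxy cPyy cEx cEy k1 k2 k3 k4 lam_ u_ hx_ hy_ lx_ ly_ L_ M_].

Lemma S1 s : lam_ s <> 0 -> u_ s <> 0 -> hx_ s ^ 2 + hy_ s ^ 2 = lam_ s * (1 - u_ s ^ 2) ->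
  k3 (cV s) = k4 (cV s) * (u_ s ^ 2 - 1).
Proof.
  destruct s as [lam u hx hy lx ly L M]. intros Hl Hu K. simpl in Hl, Hu, K. scal.
  sfin.
Qed.

Lemma S2 s : lam_ s <> 0 -> u_ s <> 0 -> hx_ s ^ 2 + hy_ s ^ 2 = lam_ s * (1 - u_ s ^ 2) ->
  k1 (cV s) * u_ s = (k3 (cV s) + k4 (cV s)) * hx_ s.
Proof.
  destruct s as [lam u hx hy lx ly L M]. intros Hl Hu K. simpl in Hl, Hu, K. scal.
  sfin.
Qed.

Lemma S3 s : lam_ s <> 0 -> u_ s <> 0 -> hx_ s ^ 2 + hy_ s ^ 2 = lam_ s * (1 - u_ s ^ 2) ->
  k2 (cV s) * u_ s = (k3 (cV s) + k4 (cV s)) * hy_ s.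
Proof.
  destruct s as [lam u hx hy lx ly L M]. intros Hl Hu K. simpl in Hl, Hu, K. scal.
  sfin.
Qed.

Lemma Q1 s : lam_ s <> 0 -> u_ s <> 0 -> hx_ s ^ 2 + hy_ s ^ 2 = lam_ s * (1 - u_ s ^ 2) ->
  ip s (cGx s) (cGx s) - ip s (cGy s) (cGy s) = (- L_ s + (lam_ s - L_ s)) - (hx_ s ^ 2 - hy_ s ^ 2).
Proof.
  destruct s as [lam u hx hy lx ly L M]. intros Hl Hu K. simpl in Hl, Hu, K. scal.
  sfin.
Qed.

Lemma Q2 s : lam_ s <> 0 -> u_ s <> 0 -> hx_ s ^ 2 + hy_ s ^ 2 = lam_ s * (1 - u_ s ^ 2) ->
  ip s (cGx s) (cGy s) = - M_ s - hx_ s * hy_ s.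
Proof.
  destruct s as [lam u hx hy lx ly L M]. intros Hl Hu K. simpl in Hl, Hu, K. scal.
  sfin.
Qed.

Definition hat (v : vec) : vec := fun i => match i with 3%nat => 0 | _ => v i end.
Definition E3v : vec := fun i => match i with 3%nat => 1 | _ => 0 end.
Definition vadd (a b : vec) : vec := fun i => a i + b i.
Definition vsc (r : R) (a : vec) : vec := fun i => r * a i.
Definition hasc (P Px Py E v : vec) (a : c4) :=
  lor4 v Px = k1 a /\ lor4 v Py = k2 a /\ lor4 v E = k3 a /\ lor3 v P = k4 a.

Lemma lor4_sym a b : lor4 a b = lor4 b a.
Proof. unfold lor4, lor3; ring. Qed.
Lemma lor3_sym a b : lor3 a b = lor3 b a.
Proof. unfold lor3; ring. Qed.
Lemma lor4_hat v w : lor4 (hat v) w = lor3 v w.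
Proof. unfold lor4, lor3, hat; simpl; ring. Qed.
Lemma lor3_hat v w : lor3 (hat v) w = lor3 v w.
Proof. unfold lor3, hat; simpl; ring. Qed.
Lemma lor4_add a b w : lor4 (vadd a b) w = lor4 a w + lor4 b w.
Proof. unfold lor4, lor3, vadd; ring. Qed.
Lemma lor3_add a b w : lor3 (vadd a b) w = lor3 a w + lor3 b w.
Proof. unfold lor3, vadd; ring. Qed.
Lemma lor4_sc r a w : lor4 (vsc r a) w = r * lor4 a w.
Proof. unfold lor4, lor3, vsc; ring. Qed.
Lemma lor3_sc r a w : lor3 (vsc r a) w = r * lor3 a w.
Proof. unfold lor3, vsc; ring. Qed.
Lemma lor3_lor4 a b : lor3 a b = lor4 a b - a 3%nat * b 3%nat.
Proof. unfold lor4; ring. Qed.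

Lemma hasc_add P Px Py E v w a b : hasc P Px Py E v a -> hasc P Px Py E w b ->
  hasc P Px Py E (vadd v w) (cadd a b).
Proof.
  intros [H1 [H2 [H3 H4]]] [G1 [G2 [G3 G4]]]. unfold hasc, cadd; simpl.
  rewrite !lor4_add, lor3_add, H1, H2, H3, H4, G1, G2, G3, G4. auto.
Qed.

Lemma hasc_sc P Px Py E v r a : hasc P Px Py E v a -> hasc P Px Py E (vsc r v) (csc r a).
Proof.
  intros [H1 [H2 [H3 H4]]]. unfold hasc, csc; simpl.
  rewrite !lor4_sc, lor3_sc. rewrite H1, H2, H3, H4. auto.
Qed.

Lemma pars (a b c d v w : vec) l : l <> 0 ->
  (forall i, (i < 4)%nat -> v i = (lor4 v a * a i + lor4 v b * b i) / l + lor4 v c * c i - lor4 v d * d i) ->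
  lor4 v w = (lor4 v a * lor4 a w + lor4 v b * lor4 b w) / l + lor4 v c * lor4 c w - lor4 v d * lor4 d w.
Proof.
  intros Hl H.
  pose proof (H 0%nat ltac:(lia)) as H0. pose proof (H 1%nat ltac:(lia)) as H1.
  pose proof (H 2%nat ltac:(lia)) as H2. pose proof (H 3%nat ltac:(lia)) as H3.
  clear H.
  set (c1 := lor4 v a) in *. set (c2 := lor4 v b) in *. set (c3 := lor4 v c) in *. set (c4 := lor4 v d) in *.
  unfold lor4, lor3. rewrite H0, H1, H2, H3. field. auto.
Qed.

Lemma hat_lt v i : (i < 3)%nat -> hat v i = v i.
Proof. intros H. destruct i as [|[|[|i]]]; auto; lia. Qed.

Lemma core (P Px Py Pxx Pxy Pyy E Ex Ey LE : vec) :
  0 < lor4 Px Px -> 0 < E 3%nat ->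
  lor3 P P = -1 -> lor4 Py Py = lor4 Px Px -> lor4 Px Py = 0 ->
  lor4 E Px = 0 -> lor4 E Py = 0 -> lor3 E P = 0 -> lor4 E E = 1 ->
  lor4 (vadd Pxx Pyy) E = lor4 Px Px ->
  lor3 Px P = 0 -> lor3 Py P = 0 ->
  lor4 Pxx Px = lor4 Pxy Py -> lor4 Pxy Px = lor4 Pyy Py ->
  lor4 Pxx Py + lor4 Px Pxy = 0 -> lor4 Pxy Py + lor4 Px Pyy = 0 ->
  lor4 Ex Px + lor4 E Pxx = 0 -> lor4 Ey Px + lor4 E Pxy = 0 ->
  lor4 Ex Py + lor4 E Pxy = 0 -> lor4 Ey Py + lor4 E Pyy = 0 ->
  lor3 Ex P + lor3 E Px = 0 -> lor3 Ey P + lor3 E Py = 0 ->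
  lor4 Ex E = 0 -> lor4 Ey E = 0 ->
  lor3 Pxx P + lor3 Px Px = 0 -> lor3 Pxy P + lor3 Px Py = 0 -> lor3 Pyy P + lor3 Py Py = 0 ->
  lor4 LE Px = -2 * lor4 Ex Pxx - 2 * lor4 Ey Pxy - 2 * lor4 Pxx Px + lor4 (vadd Pxx Pyy) Ex ->
  lor4 LE Py = -2 * lor4 Ex Pxy - 2 * lor4 Ey Pyy - 2 * lor4 Pxy Px + lor4 (vadd Pxx Pyy) Ey ->
  lor4 LE E + lor4 Ex Ex + lor4 Ey Ey = 0 ->
  lor3 LE P + 2 * lor3 Ex Px + 2 * lor3 Ey Py + lor3 E (vadd Pxx Pyy) = 0 ->
  let u := E 3%nat in
  let Gf := fun i => (E i + P i) / u in
  let Vf := fun i => (LE i + (Pxx i + Pyy i)) / u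
            - 2 * ((Ex i + Px i) * Ex 3%nat + (Ey i + Py i) * Ey 3%nat) / u ^ 2
            - (E i + P i) * LE 3%nat / u ^ 2 + 2 * (E i + P i) * (Ex 3%nat ^ 2 + Ey 3%nat ^ 2) / u ^ 3 in
  let Gxf := fun i => ((Ex i + Px i) * u - (E i + P i) * Ex 3%nat) / u ^ 2 in
  let Gyf := fun i => ((Ey i + Py i) * u - (E i + P i) * Ey 3%nat) / u ^ 2 in
  (forall i, (i < 3)%nat -> Vf i + lor3 Vf Gf * Gf i = 0) /\
  lor3 Gxf Gxf - lor3 Gyf Gyf = (lor4 Px Ex - lor4 Py Ey) - (Px 3%nat ^ 2 - Py 3%nat ^ 2) /\
  2 * lor3 Gxf Gyf = (lor4 Px Ey + lor4 Py Ex) - 2 * Px 3%nat * Py 3%nat.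
Proof.
  intros Hlam Hu h1 h2 h3 h4 h5 h6 h7 h8 d1x d1y d2x d2y d3x d3y d4x d4y d5x d5y d6x d6y d7x d7y
    d1xx d1xy d1yy k1h k2h k3h k4h u Gf Vf Gxf Gyf.
  assert (Hl0 : lor4 Px Px <> 0) by lra.
  assert (Hu0 : u <> 0) by (unfold u; lra).
  set (s := mkSP (lor4 Px Px) (E 3%nat) (Px 3%nat) (Py 3%nat) (2 * lor4 Pxx Px) (2 * lor4 Pxy Px)
                (lor4 Pxx E) (lor4 Pxy E)).
  assert (FR : forall v i, (i < 4)%nat -> v i = (lor4 v Px * Px i + lor4 v Py * Py i) / lor4 Px Px
                 + lor4 v E * E i - lor4 v (hat P) * hat P i).
  { intros v. apply frame_gen; auto.
    - rewrite lor4_hat, lor3_sym, lor3_hat. exact h1.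
    - rewrite lor4_sym; exact h4.
    - rewrite lor4_sym, lor4_hat, lor3_sym; exact d1x.
    - rewrite lor4_sym; exact h5.
    - rewrite lor4_sym, lor4_hat, lor3_sym; exact d1y.
    - rewrite lor4_sym, lor4_hat, lor3_sym; exact h6. }
  assert (IP : forall v w a b, hasc P Px Py E v a -> hasc P Px Py E w b -> lor4 v w = ip s a b).
  { intros v w a b [A1 [A2 [A3 A4]]] [B1 [B2 [B3 B4]]].
    rewrite (pars Px Py E (hat P) v w (lor4 Px Px) Hl0 (FR v)).
    rewrite (lor4_sym v (hat P)), !lor4_hat, (lor4_sym Px w), (lor4_sym Py w), (lor4_sym E w),
      (lor3_sym P v), (lor3_sym P w), A1, A2, A3, A4, B1, B2, B3, B4.
    unfold ip; simpl. ring. }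
  assert (C3 : forall v a, hasc P Px Py E v a -> v 3%nat = cmp3 s a).
  { intros v a Hv. rewrite (FR v 3%nat ltac:(lia)). destruct Hv as [A1 [A2 [A3 A4]]].
    rewrite (lor4_sym v (hat P)), lor4_hat, lor3_sym, A1, A2, A3, A4. unfold cmp3, hat; simpl. field. auto. }
  assert (L3 : forall v w a b, hasc P Px Py E v a -> hasc P Px Py E w b -> lor3 v w = l3 s a b).
  { intros v w a b Hv Hw. rewrite lor3_lor4, (IP v w a b Hv Hw), (C3 v a Hv), (C3 w b Hw). reflexivity. }
  assert (HH : forall v a, hasc P Px Py E v a -> hasc P Px Py E (hat v) (chat s a)).
  { intros v a Hv. pose proof (C3 v a Hv) as e3. destruct Hv as [A1 [A2 [A3 A4]]].
    unfold hasc, chat, cadd, csc, cE3; simpl.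
    rewrite !lor4_hat, lor3_hat, A4. rewrite !lor3_lor4, A1, A2, A3, e3. simpl.
    repeat split; ring. }
  assert (cPx_ : hasc P Px Py E Px (cPx s)).
  { unfold hasc, cPx; simpl. rewrite (lor4_sym Px E). auto. }
  assert (cPy_ : hasc P Px Py E Py (cPy s)).
  { unfold hasc, cPy; simpl. rewrite (lor4_sym Py Px), (lor4_sym Py E). auto. }
  assert (cE_ : hasc P Px Py E E cE).
  { unfold hasc, cE; simpl. auto. }
  assert (ce_ : hasc P Px Py E (hat P) ce).
  { unfold hasc, ce; simpl. rewrite !lor4_hat, lor3_hat, !(lor3_sym P). auto. }
  assert (cE3_ : hasc P Px Py E E3v (cE3 s)).
  { unfold hasc, cE3, E3v, lor4, lor3; simpl. repeat split; ring. }
  assert (cPxx_ : hasc P Px Py E Pxx (cPxx s)).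
  { unfold hasc, cPxx; simpl. rewrite (lor4_sym Px Pxy) in d3x.
    rewrite (lor3_lor4 Px Px) in d1xx. repeat split; lra. }
  assert (cPxy_ : hasc P Px Py E Pxy (cPxy s)).
  { unfold hasc, cPxy; simpl. rewrite (lor3_lor4 Px Py), h3 in d1xy. repeat split; lra. }
  assert (cPyy_ : hasc P Px Py E Pyy (cPyy s)).
  { unfold hasc, cPyy; simpl. rewrite (lor4_sym Px Pyy) in d3y.
    rewrite (lor3_lor4 Py Py), h2 in d1yy. rewrite lor4_add in h8. repeat split; lra. }
  assert (cEx_ : hasc P Px Py E Ex (cEx s)).
  { unfold hasc, cEx; simpl. rewrite (lor4_sym E Pxx) in d4x. rewrite (lor4_sym E Pxy) in d5x.
    rewrite (lor3_lor4 E Px), h4 in d6x. repeat split; lra. }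
  assert (cEy_ : hasc P Px Py E Ey (cEy s)).
  { unfold hasc, cEy; simpl. rewrite (lor4_sym E Pxy) in d4y. rewrite (lor4_sym E Pyy) in d5y.
    rewrite lor4_add in h8.
    rewrite (lor3_lor4 E Py), h5 in d6y. repeat split; lra. }
  assert (cLP_ : hasc P Px Py E (vadd Pxx Pyy) (cLP s)) by (apply hasc_add; auto).
  assert (cLE_ : hasc P Px Py E LE (cLE s)).
  { unfold hasc, cLE; simpl. repeat split.
    - rewrite k1h, (IP Ex Pxx _ _ cEx_ cPxx_), (IP Ey Pxy _ _ cEy_ cPxy_), (IP _ Ex _ _ cLP_ cEx_). ring.
    - rewrite k2h, (IP Ex Pxy _ _ cEx_ cPxy_), (IP Ey Pyy _ _ cEy_ cPyy_), (IP _ Ey _ _ cLP_ cEy_). ring.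
    - rewrite (IP Ex Ex _ _ cEx_ cEx_), (IP Ey Ey _ _ cEy_ cEy_) in k3h. lra.
    - rewrite (L3 Ex Px _ _ cEx_ cPx_), (L3 Ey Py _ _ cEy_ cPy_), (L3 E _ _ _ cE_ cLP_) in k4h. lra. }
  assert (K : hx_ s ^ 2 + hy_ s ^ 2 = lam_ s * (1 - u_ s ^ 2)).
  { pose proof (IP E3v E3v _ _ cE3_ cE3_) as G. unfold E3v, lor4, lor3 in G; simpl in G.
    unfold ip, cE3 in G; simpl in G. simpl.
    set (a := Px 3%nat) in *. set (b := Py 3%nat) in *. set (c := E 3%nat) in *. set (l := lor4 Px Px) in *.
    assert (X : (a * a + b * b) / l = 1 - c * c) by lra.
    apply (Rmult_eq_reg_r (/ l)); [| apply Rinv_neq_0_compat; auto].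
    transitivity ((a * a + b * b) / l). unfold Rdiv; ring. rewrite X. field. auto. }
  assert (Hsl : lam_ s <> 0) by (simpl; auto).
  assert (Hsu : u_ s <> 0) by (simpl; auto).
  pose proof (S1 s Hsl Hsu K) as S1'. pose proof (S2 s Hsl Hsu K) as S2'.
  pose proof (S3 s Hsl Hsu K) as S3'. pose proof (Q1 s Hsl Hsu K) as Q1'. pose proof (Q2 s Hsl Hsu K) as Q2'.
  pose proof (C3 Ex _ cEx_) as ux_eq. pose proof (C3 Ey _ cEy_) as uy_eq. pose proof (C3 LE _ cLE_) as Lu_eq.
  change (cmp3 s (cEx s)) with (cux s) in ux_eq.
  change (cmp3 s (cEy s)) with (cuy s) in uy_eq.
  change (cmp3 s (cLE s)) with (cLu s) in Lu_eq.
  set (Ghat := vsc (/ u) (vadd E (hat P))).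
  assert (cG_ : hasc P Px Py E Ghat (csc (/ u) (cadd cE ce))).
  { apply hasc_sc, hasc_add; auto. }
  set (Gxh := vadd (vsc (/ u) (vadd Ex (hat Px))) (vsc (- cux s / u ^ 2) (vadd E (hat P)))).
  set (Gyh := vadd (vsc (/ u) (vadd Ey (hat Py))) (vsc (- cuy s / u ^ 2) (vadd E (hat P)))).
  assert (cGx_ : hasc P Px Py E Gxh (cGx s)).
  { unfold Gxh, cGx. apply hasc_add; apply hasc_sc; apply hasc_add; auto. }
  assert (cGy_ : hasc P Px Py E Gyh (cGy s)).
  { unfold Gyh, cGy. apply hasc_add; apply hasc_sc; apply hasc_add; auto. }
  set (Vh := vadd (vsc (/ u) (vadd LE (hat (vadd Pxx Pyy))))
    (vadd (vsc (-2 * cux s / u ^ 2) (vadd Ex (hat Px)))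
    (vadd (vsc (-2 * cuy s / u ^ 2) (vadd Ey (hat Py)))
          (vsc (- cLu s / u ^ 2 + 2 * (cux s ^ 2 + cuy s ^ 2) / u ^ 3) (vadd E (hat P)))))).
  assert (cV_ : hasc P Px Py E Vh (cV s)).
  { unfold Vh, cV. apply hasc_add; [apply hasc_sc, hasc_add; auto|].
    apply hasc_add; [apply hasc_sc, hasc_add; auto|].
    apply hasc_add; [apply hasc_sc, hasc_add; auto|].
    apply hasc_sc, hasc_add; auto. }
  assert (Gxe : forall j, (j < 3)%nat -> Gxf j = Gxh j).
  { intros j Hj. unfold Gxf, Gxh, vadd, vsc. rewrite !hat_lt by auto. rewrite ux_eq. field. auto. }
  assert (Gye : forall j, (j < 3)%nat -> Gyf j = Gyh j).
  { intros j Hj. unfold Gyf, Gyh, vadd, vsc. rewrite !hat_lt by auto. rewrite uy_eq. field. auto. }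
  assert (Ge : forall j, (j < 3)%nat -> Gf j = Ghat j).
  { intros j Hj. unfold Gf, Ghat, vadd, vsc. rewrite !hat_lt by auto. field. auto. }
  assert (Ve : forall j, (j < 3)%nat -> Vf j = Vh j).
  { intros j Hj. unfold Vf, Vh, vadd, vsc. rewrite !hat_lt by auto. rewrite ux_eq, uy_eq, Lu_eq. field. auto. }
  assert (L3e : forall f g f' g', (forall j, (j < 3)%nat -> f j = f' j) -> (forall j, (j < 3)%nat -> g j = g' j) ->
            lor3 f g = lor3 f' g').
  { intros f g f' g' Hf Hg. unfold lor3. rewrite !Hf, !Hg by lia. reflexivity. }
  assert (Gx3 : Gxh 3%nat = 0).
  { unfold Gxh, vadd, vsc, hat. rewrite <- ux_eq. fold u. field. auto. }
  assert (Gy3 : Gyh 3%nat = 0).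
  { unfold Gyh, vadd, vsc, hat. rewrite <- uy_eq. fold u. field. auto. }
  assert (V3 : Vh 3%nat = 0).
  { unfold Vh, vadd, vsc, hat. rewrite <- ux_eq, <- uy_eq, <- Lu_eq. fold u. field. auto. }
  assert (Gh3 : Ghat 3%nat = 1).
  { unfold Ghat, vadd, vsc, hat. fold u. field. auto. }
  split; [|split].
  - intros i Hi.
    rewrite (L3e Vf Gf Vh Ghat Ve Ge), (Ve i Hi), (Ge i Hi), lor3_lor4, V3, (IP _ _ _ _ cV_ cG_).
    rewrite (FR Vh i ltac:(lia)).
    destruct cV_ as [V1 [V2 [V3' V4]]].
    rewrite (lor4_sym Vh (hat P)), lor4_hat, lor3_sym, V1, V2, V3', V4.
    pose proof (FR E3v i ltac:(lia)) as FE.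
    destruct cE3_ as [T1 [T2 [T3 T4]]].
    rewrite (lor4_sym E3v (hat P)), lor4_hat, (lor3_sym P E3v), T1, T2, T3, T4 in FE.
    assert (E3i : E3v i = 0) by (destruct i as [|[|[|i]]]; simpl; auto; lia).
    rewrite E3i in FE. simpl in FE.
    unfold Ghat, vsc, vadd. rewrite hat_lt by auto.
    unfold ip; cbn [k1 k2 k3 k4 csc cadd cE ce]. change (lam_ s) with (lor4 Px Px).
    change (u_ s) with (E 3%nat) in S1', S2', S3'. change (hx_ s) with (Px 3%nat) in S2'. change (hy_ s) with (Py 3%nat) in S3'.
    set (K1 := k1 (cV s)) in *. set (K2 := k2 (cV s)) in *. set (K3 := k3 (cV s)) in *. set (K4 := k4 (cV s)) in *.
    assert (Ei : E i = - (Px 3%nat * Px i + Py 3%nat * Py i) / (lor4 Px Px * u)).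
    { unfold u in *. apply (Rmult_eq_reg_l (E 3%nat)); [|lra]. field_simplify; [|auto]. replace ((- Px 3%nat * Px i - Py 3%nat * Py i) / lor4 Px Px) with (- ((Px 3%nat * Px i + Py 3%nat * Py i) / lor4 Px Px)) by (field; auto). lra. }
    assert (K1e : K1 = (K3 + K4) * Px 3%nat / u) by (unfold u; rewrite <- S2'; field; auto).
    assert (K2e : K2 = (K3 + K4) * Py 3%nat / u) by (unfold u; rewrite <- S3'; field; auto).
    rewrite K1e, K2e, S1', Ei. unfold u. field. split; auto.
  - rewrite (L3e Gxf Gxf Gxh Gxh Gxe Gxe), (L3e Gyf Gyf Gyh Gyh Gye Gye), !lor3_lor4, Gx3, Gy3,
      (IP _ _ _ _ cGx_ cGx_), (IP _ _ _ _ cGy_ cGy_).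
    rewrite (lor4_sym Px Ex), (lor4_sym Py Ey).
    destruct cEx_ as [X1 _]. destruct cEy_ as [_ [Y2 _]]. rewrite X1, Y2.
    replace (ip s (cGx s) (cGx s) - 0 * 0 - (ip s (cGy s) (cGy s) - 0 * 0))
      with (ip s (cGx s) (cGx s) - ip s (cGy s) (cGy s)) by ring.
    rewrite Q1'. simpl. ring.
  - rewrite (L3e Gxf Gyf Gxh Gyh Gxe Gye), lor3_lor4, Gx3, Gy3, (IP _ _ _ _ cGx_ cGy_), Q2'.
    rewrite (lor4_sym Px Ey), (lor4_sym Py Ex).
    destruct cEx_ as [_ [X2 _]]. destruct cEy_ as [Y1 _]. rewrite X2, Y1. simpl. ring.
Qed.

Lemma lor3C_dz f g x y : lor3C (dz f x y) (dz g x y) =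
  ((lor3 (dx f x y) (dx g x y) - lor3 (dy f x y) (dy g x y)) / 4,
   - (lor3 (dx f x y) (dy g x y) + lor3 (dy f x y) (dx g x y)) / 4).
Proof. unfold lor3C, dz, lor3. apply injective_projections; simpl; field. Qed.

Lemma lor4C_dz f g x y : lor4C (dz f x y) (dz g x y) =
  ((lor4 (dx f x y) (dx g x y) - lor4 (dy f x y) (dy g x y)) / 4,
   - (lor4 (dx f x y) (dy g x y) + lor4 (dy f x y) (dx g x y)) / 4).
Proof. unfold lor4C, lor3C, dz, lor4, lor3. apply injective_projections; simpl; field. Qed.

Lemma q1 (f g h : R -> R) x : ex_derive f x -> ex_derive g x -> ex_derive h x -> h x <> 0 ->
  Derive (fun t => (f t + g t) / h t) x
  = ((Derive f x + Derive g x) * h x - (f x + g x) * Derive h x) / (h x) ^ 2.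
Proof.
  intros Hf Hg Hh Hn. apply is_derive_unique. auto_derive; [tauto|].
  change (fun t => f t) with f; change (fun t => g t) with g; change (fun t => h t) with h.
  field. auto.
Qed.

Lemma q2 (f g h f1 g1 h1 : R -> R) x : ex_derive f x -> ex_derive g x -> ex_derive h x ->
  ex_derive f1 x -> ex_derive g1 x -> ex_derive h1 x -> h x <> 0 ->
  Derive (fun t => ((f1 t + g1 t) * h t - (f t + g t) * h1 t) / (h t) ^ 2) x
  = (((Derive f1 x + Derive g1 x) * h x + (f1 x + g1 x) * Derive h x
      - (Derive f x + Derive g x) * h1 x - (f x + g x) * Derive h1 x) * h x
     - 2 * Derive h x * ((f1 x + g1 x) * h x - (f x + g x) * h1 x)) / (h x) ^ 3.
Proof.
  intros Hf Hg Hh Hf1 Hg1 Hh1 Hn. apply is_derive_unique. auto_derive; [repeat split; auto; try (apply pow_nonzero; auto)|].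
  change (fun t => f t) with f; change (fun t => g t) with g; change (fun t => h t) with h.
  change (fun t => f1 t) with f1; change (fun t => g1 t) with g1; change (fun t => h1 t) with h1.
  field. auto.
Qed.

Lemma rel1x4 Om A B c x y : open2 Om -> Om x y -> dfx A x y -> dfx B x y ->
  (forall a b, Om a b -> lor4 (A a b) (B a b) = c) ->
  lor4 (dx A x y) (B x y) + lor4 (A x y) (dx B x y) = 0.
Proof. intros Ho H HA HB HF. eapply (is_derive_const_loc_x Om (fun a b => lor4 (A a b) (B a b))); eauto. apply isDx_lor4; auto. Qed.
Lemma rel1y4 Om A B c x y : open2 Om -> Om x y -> dfy A x y -> dfy B x y ->
  (forall a b, Om a b -> lor4 (A a b) (B a b) = c) ->
  lor4 (dy A x y) (B x y) + lor4 (A x y) (dy B x y) = 0.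
Proof. intros Ho H HA HB HF. eapply (is_derive_const_loc_y Om (fun a b => lor4 (A a b) (B a b))); eauto. apply isDy_lor4; auto. Qed.
Lemma rel1x3 Om A B c x y : open2 Om -> Om x y -> dfx A x y -> dfx B x y ->
  (forall a b, Om a b -> lor3 (A a b) (B a b) = c) ->
  lor3 (dx A x y) (B x y) + lor3 (A x y) (dx B x y) = 0.
Proof. intros Ho H HA HB HF. eapply (is_derive_const_loc_x Om (fun a b => lor3 (A a b) (B a b))); eauto. apply isDx_lor3; auto. Qed.
Lemma rel1y3 Om A B c x y : open2 Om -> Om x y -> dfy A x y -> dfy B x y ->
  (forall a b, Om a b -> lor3 (A a b) (B a b) = c) ->
  lor3 (dy A x y) (B x y) + lor3 (A x y) (dy B x y) = 0.
Proof. intros Ho H HA HB HF. eapply (is_derive_const_loc_y Om (fun a b => lor3 (A a b) (B a b))); eauto. apply isDy_lor3; auto. Qed.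

Lemma rel2x4 Om A B C D c x y : open2 Om -> Om x y -> dfx A x y -> dfx B x y -> dfx C x y -> dfx D x y ->
  (forall a b, Om a b -> lor4 (A a b) (B a b) + lor4 (C a b) (D a b) = c) ->
  (lor4 (dx A x y) (B x y) + lor4 (A x y) (dx B x y)) + (lor4 (dx C x y) (D x y) + lor4 (C x y) (dx D x y)) = 0.
Proof.
  intros Ho H HA HB HC HD HF.
  eapply (is_derive_const_loc_x Om (fun a b => lor4 (A a b) (B a b) + lor4 (C a b) (D a b))); eauto.
  apply (is_derive_plus (fun t => lor4 (A t y) (B t y)) (fun t => lor4 (C t y) (D t y))); apply isDx_lor4; auto.
Qed.
Lemma rel2y4 Om A B C D c x y : open2 Om -> Om x y -> dfy A x y -> dfy B x y -> dfy C x y -> dfy D x y ->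
  (forall a b, Om a b -> lor4 (A a b) (B a b) + lor4 (C a b) (D a b) = c) ->
  (lor4 (dy A x y) (B x y) + lor4 (A x y) (dy B x y)) + (lor4 (dy C x y) (D x y) + lor4 (C x y) (dy D x y)) = 0.
Proof.
  intros Ho H HA HB HC HD HF.
  eapply (is_derive_const_loc_y Om (fun a b => lor4 (A a b) (B a b) + lor4 (C a b) (D a b))); eauto.
  apply (is_derive_plus (fun t => lor4 (A x t) (B x t)) (fun t => lor4 (C x t) (D x t))); apply isDy_lor4; auto.
Qed.
Lemma rel2x3 Om A B C D c x y : open2 Om -> Om x y -> dfx A x y -> dfx B x y -> dfx C x y -> dfx D x y ->
  (forall a b, Om a b -> lor3 (A a b) (B a b) + lor3 (C a b) (D a b) = c) ->
  (lor3 (dx A x y) (B x y) + lor3 (A x y) (dx B x y)) + (lor3 (dx C x y) (D x y) + lor3 (C x y) (dx D x y)) = 0.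
Proof.
  intros Ho H HA HB HC HD HF.
  eapply (is_derive_const_loc_x Om (fun a b => lor3 (A a b) (B a b) + lor3 (C a b) (D a b))); eauto.
  apply (is_derive_plus (fun t => lor3 (A t y) (B t y)) (fun t => lor3 (C t y) (D t y))); apply isDx_lor3; auto.
Qed.
Lemma rel2y3 Om A B C D c x y : open2 Om -> Om x y -> dfy A x y -> dfy B x y -> dfy C x y -> dfy D x y ->
  (forall a b, Om a b -> lor3 (A a b) (B a b) + lor3 (C a b) (D a b) = c) ->
  (lor3 (dy A x y) (B x y) + lor3 (A x y) (dy B x y)) + (lor3 (dy C x y) (D x y) + lor3 (C x y) (dy D x y)) = 0.
Proof.
  intros Ho H HA HB HC HD HF.
  eapply (is_derive_const_loc_y Om (fun a b => lor3 (A a b) (B a b) + lor3 (C a b) (D a b))); eauto.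
  apply (is_derive_plus (fun t => lor3 (A x t) (B x t)) (fun t => lor3 (C x t) (D x t))); apply isDy_lor3; auto.
Qed.
Lemma rel2x4m Om A B C D c x y : open2 Om -> Om x y -> dfx A x y -> dfx B x y -> dfx C x y -> dfx D x y ->
  (forall a b, Om a b -> lor4 (A a b) (B a b) - lor4 (C a b) (D a b) = c) ->
  (lor4 (dx A x y) (B x y) + lor4 (A x y) (dx B x y)) - (lor4 (dx C x y) (D x y) + lor4 (C x y) (dx D x y)) = 0.
Proof.
  intros Ho H HA HB HC HD HF.
  eapply (is_derive_const_loc_x Om (fun a b => lor4 (A a b) (B a b) - lor4 (C a b) (D a b))); eauto.
  apply (is_derive_minus (fun t => lor4 (A t y) (B t y)) (fun t => lor4 (C t y) (D t y))); apply isDx_lor4; auto.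
Qed.
Lemma rel2y4m Om A B C D c x y : open2 Om -> Om x y -> dfy A x y -> dfy B x y -> dfy C x y -> dfy D x y ->
  (forall a b, Om a b -> lor4 (A a b) (B a b) - lor4 (C a b) (D a b) = c) ->
  (lor4 (dy A x y) (B x y) + lor4 (A x y) (dy B x y)) - (lor4 (dy C x y) (D x y) + lor4 (C x y) (dy D x y)) = 0.
Proof.
  intros Ho H HA HB HC HD HF.
  eapply (is_derive_const_loc_y Om (fun a b => lor4 (A a b) (B a b) - lor4 (C a b) (D a b))); eauto.
  apply (is_derive_minus (fun t => lor4 (A x t) (B x t)) (fun t => lor4 (C x t) (D x t))); apply isDy_lor4; auto.
Qed.

Lemma lor4_ext c a b : (forall i, (i < 4)%nat -> a i = b i) -> lor4 c a = lor4 c b.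
Proof. intros H. unfold lor4, lor3. rewrite !H by lia. reflexivity. Qed.
Lemma lor4_ext_l c a b : (forall i, (i < 4)%nat -> a i = b i) -> lor4 a c = lor4 b c.
Proof. intros H. unfold lor4, lor3. rewrite !H by lia. reflexivity. Qed.
Lemma lor3_ext_l c a b : (forall i, (i < 4)%nat -> a i = b i) -> lor3 a c = lor3 b c.
Proof. intros H. unfold lor3. rewrite !H by lia. reflexivity. Qed.
Lemma lor3_ext c a b : (forall i, (i < 4)%nat -> a i = b i) -> lor3 c a = lor3 c b.
Proof. intros H. unfold lor3. rewrite !H by lia. reflexivity. Qed.

Ltac smvs := match goal with
 | |- smv _ (dx ?F) => apply smv_dx; smvs
 | |- smv _ (dy ?F) => apply smv_dy; smvs
 | |- _ => assumption
 end.
Ltac dfs Om := match goal with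
 | |- dfx _ _ _ => apply (smv_dfx Om); [smvs | assumption]
 | |- dfy _ _ _ => apply (smv_dfy Om); [smvs | assumption]
 end.

Lemma dfx_lap Om F x y : smv Om F -> Om x y -> dfx (lap F) x y.
Proof.
  intros Hs H i Hi. unfold lap.
  apply (ex_derive_plus (fun t => dx (dx F) t y i) (fun t => dy (dy F) t y i)).
  - apply (smv_dfx Om); auto. apply smv_dx, smv_dx; auto.
  - apply (smv_dfx Om); auto. apply smv_dy, smv_dy; auto.
Qed.

Lemma dfy_lap Om F x y : smv Om F -> Om x y -> dfy (lap F) x y.
Proof.
  intros Hs H i Hi. unfold lap.
  apply (ex_derive_plus (fun t => dx (dx F) x t i) (fun t => dy (dy F) x t i)).
  - apply (smv_dfy Om); auto. apply smv_dx, smv_dx; auto.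
  - apply (smv_dfy Om); auto. apply smv_dy, smv_dy; auto.
Qed.

Lemma point Om psi eta x y :
  open2 Om -> smv Om psi -> smv Om eta ->
  (forall a b, Om a b -> lor3 (psi a b) (psi a b) = -1 /\ 0 < psi a b 0%nat /\
     lor4 (dx psi a b) (dx psi a b) = lor4 (dy psi a b) (dy psi a b) /\
     lor4 (dx psi a b) (dy psi a b) = 0 /\ 0 < lor4 (dx psi a b) (dx psi a b)) ->
  (forall a b, Om a b -> lor4 (eta a b) (dx psi a b) = 0 /\ lor4 (eta a b) (dy psi a b) = 0 /\
     lor3 (eta a b) (psi a b) = 0 /\ lor4 (eta a b) (eta a b) = 1 /\ 0 < eta a b 3%nat) ->
  (forall a b, Om a b -> meanH psi eta a b = 1 / 2) ->
  Om x y ->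
  (forall i, (i < 3)%nat -> lap (hypGauss psi eta) x y i
      + lor3 (lap (hypGauss psi eta) x y) (hypGauss psi eta x y) * hypGauss psi eta x y i = 0) /\
  lor3C (dz (hypGauss psi eta) x y) (dz (hypGauss psi eta) x y) = (- abreschQ psi eta x y)%C.
Proof.
  intros Ho sP sE Hc Hn HH Hxy.
  destruct (Hc x y Hxy) as [c1 [c2 [c3 [c4 c5]]]].
  destruct (Hn x y Hxy) as [n1 [n2 [n3 [n4 n5]]]].
  assert (Sxy : forall a b, Om a b -> forall i, (i < 4)%nat -> dy (dx psi) a b i = dx (dy psi) a b i).
  { intros a b Hab. apply (smv_schwarz Om); auto. }
  assert (R1x : forall a b, Om a b -> lor3 (dx psi a b) (psi a b) + lor3 (psi a b) (dx psi a b) = 0).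
  { intros a b Hab. apply (rel1x3 Om psi psi (-1) a b Ho Hab); [dfs Om | dfs Om | intros; apply Hc; auto]. }
  assert (R1y : forall a b, Om a b -> lor3 (dy psi a b) (psi a b) + lor3 (psi a b) (dy psi a b) = 0).
  { intros a b Hab. apply (rel1y3 Om psi psi (-1) a b Ho Hab); [dfs Om | dfs Om | intros; apply Hc; auto]. }
  assert (R4x : forall a b, Om a b -> lor4 (dx eta a b) (dx psi a b) + lor4 (eta a b) (dx (dx psi) a b) = 0).
  { intros a b Hab. apply (rel1x4 Om eta (dx psi) 0 a b Ho Hab); [dfs Om | dfs Om | intros; apply Hn; auto]. }
  assert (R4y : forall a b, Om a b -> lor4 (dy eta a b) (dx psi a b) + lor4 (eta a b) (dy (dx psi) a b) = 0).
  { intros a b Hab. apply (rel1y4 Om eta (dx psi) 0 a b Ho Hab); [dfs Om | dfs Om | intros; apply Hn; auto]. }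
  assert (R5x : forall a b, Om a b -> lor4 (dx eta a b) (dy psi a b) + lor4 (eta a b) (dx (dy psi) a b) = 0).
  { intros a b Hab. apply (rel1x4 Om eta (dy psi) 0 a b Ho Hab); [dfs Om | dfs Om | intros; apply Hn; auto]. }
  assert (R5y : forall a b, Om a b -> lor4 (dy eta a b) (dy psi a b) + lor4 (eta a b) (dy (dy psi) a b) = 0).
  { intros a b Hab. apply (rel1y4 Om eta (dy psi) 0 a b Ho Hab); [dfs Om | dfs Om | intros; apply Hn; auto]. }
  assert (R6x : forall a b, Om a b -> lor3 (dx eta a b) (psi a b) + lor3 (eta a b) (dx psi a b) = 0).
  { intros a b Hab. apply (rel1x3 Om eta psi 0 a b Ho Hab); [dfs Om | dfs Om | intros; apply Hn; auto]. }
  assert (R6y : forall a b, Om a b -> lor3 (dy eta a b) (psi a b) + lor3 (eta a b) (dy psi a b) = 0).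
  { intros a b Hab. apply (rel1y3 Om eta psi 0 a b Ho Hab); [dfs Om | dfs Om | intros; apply Hn; auto]. }
  assert (R7x : forall a b, Om a b -> lor4 (dx eta a b) (eta a b) + lor4 (eta a b) (dx eta a b) = 0).
  { intros a b Hab. apply (rel1x4 Om eta eta 1 a b Ho Hab); [dfs Om | dfs Om | intros; apply Hn; auto]. }
  assert (R7y : forall a b, Om a b -> lor4 (dy eta a b) (eta a b) + lor4 (eta a b) (dy eta a b) = 0).
  { intros a b Hab. apply (rel1y4 Om eta eta 1 a b Ho Hab); [dfs Om | dfs Om | intros; apply Hn; auto]. }
  assert (R3 : forall a b, Om a b -> lor4 (dx psi a b) (dx psi a b) - lor4 (dy psi a b) (dy psi a b) = 0).
  { intros a b Hab. destruct (Hc a b Hab) as [_ [_ [X _]]]. lra. }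
  assert (H8 : forall a b, Om a b -> lor4 (lap psi a b) (eta a b) - lor4 (dx psi a b) (dx psi a b) = 0).
  { intros a b Hab. pose proof (HH a b Hab) as Hm. destruct (Hc a b Hab) as [_ [_ [_ [_ Hl]]]].
    unfold meanH, lam in Hm.
    assert (X : lor4 (lap psi a b) (eta a b) = lor4 (dx psi a b) (dx psi a b)).
    { apply (Rmult_eq_reg_r (/ (2 * lor4 (dx psi a b) (dx psi a b)))).
      - rewrite <- Rdiv_def, Hm. field. lra.
      - apply Rinv_neq_0_compat. lra. }
    lra. }
  pose proof (R1x x y Hxy) as d1x. pose proof (R1y x y Hxy) as d1y.
  rewrite (lor3_sym (psi x y)) in d1x, d1y.
  pose proof (rel2x4m Om (dx psi) (dx psi) (dy psi) (dy psi) 0 x y Ho Hxy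
     ltac:(dfs Om) ltac:(dfs Om) ltac:(dfs Om) ltac:(dfs Om) R3) as d2x.
  pose proof (rel2y4m Om (dx psi) (dx psi) (dy psi) (dy psi) 0 x y Ho Hxy
     ltac:(dfs Om) ltac:(dfs Om) ltac:(dfs Om) ltac:(dfs Om) R3) as d2y.
  rewrite (lor4_ext_l (dy psi x y) (dx (dy psi) x y) (dy (dx psi) x y)) in d2x
    by (intros; symmetry; apply Sxy; auto).
  rewrite (lor4_ext (dy psi x y) (dx (dy psi) x y) (dy (dx psi) x y)) in d2x
    by (intros; symmetry; apply Sxy; auto).
  pose proof (rel1x4 Om (dx psi) (dy psi) 0 x y Ho Hxy ltac:(dfs Om) ltac:(dfs Om)
     ltac:(intros; apply Hc; auto)) as d3x.
  pose proof (rel1y4 Om (dx psi) (dy psi) 0 x y Ho Hxy ltac:(dfs Om) ltac:(dfs Om)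
     ltac:(intros; apply Hc; auto)) as d3y.
  rewrite (lor4_ext (dx psi x y) (dx (dy psi) x y) (dy (dx psi) x y)) in d3x
    by (intros; symmetry; apply Sxy; auto).
  pose proof (R4x x y Hxy) as d4x. pose proof (R4y x y Hxy) as d4y.
  pose proof (R5x x y Hxy) as d5x. pose proof (R5y x y Hxy) as d5y.
  rewrite (lor4_ext (eta x y) (dx (dy psi) x y) (dy (dx psi) x y)) in d5x
    by (intros; symmetry; apply Sxy; auto).
  pose proof (R6x x y Hxy) as d6x. pose proof (R6y x y Hxy) as d6y.
  pose proof (R7x x y Hxy) as d7x. pose proof (R7y x y Hxy) as d7y.
  rewrite (lor4_sym (eta x y) (dx eta x y)) in d7x. rewrite (lor4_sym (eta x y) (dy eta x y)) in d7y.
  pose proof (rel2x3 Om (dx psi) psi psi (dx psi) 0 x y Ho Hxy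
     ltac:(dfs Om) ltac:(dfs Om) ltac:(dfs Om) ltac:(dfs Om) R1x) as d1xx.
  pose proof (rel2y3 Om (dx psi) psi psi (dx psi) 0 x y Ho Hxy
     ltac:(dfs Om) ltac:(dfs Om) ltac:(dfs Om) ltac:(dfs Om) R1x) as d1xy.
  pose proof (rel2y3 Om (dy psi) psi psi (dy psi) 0 x y Ho Hxy
     ltac:(dfs Om) ltac:(dfs Om) ltac:(dfs Om) ltac:(dfs Om) R1y) as d1yy.
  rewrite !(lor3_sym (psi x y)) in d1xx, d1xy, d1yy.
  rewrite (lor3_sym (dy psi x y) (dx psi x y)) in d1xy.
  assert (h8 : lor4 (vadd (dx (dx psi) x y) (dy (dy psi) x y)) (eta x y) = lor4 (dx psi x y) (dx psi x y)).
  { pose proof (H8 x y Hxy) as X. change (lap psi x y) with (vadd (dx (dx psi) x y) (dy (dy psi) x y)) in X. lra. }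
  assert (d2x' : lor4 (dx (dx psi) x y) (dx psi x y) = lor4 (dy (dx psi) x y) (dy psi x y)).
  { rewrite (lor4_sym (dx psi x y) (dx (dx psi) x y)), (lor4_sym (dy psi x y) (dy (dx psi) x y)) in d2x. lra. }
  assert (d2y' : lor4 (dy (dx psi) x y) (dx psi x y) = lor4 (dy (dy psi) x y) (dy psi x y)).
  { rewrite (lor4_sym (dx psi x y) (dy (dx psi) x y)), (lor4_sym (dy psi x y) (dy (dy psi) x y)) in d2y. lra. }
  assert (d7x' : lor4 (dx eta x y) (eta x y) = 0) by lra.
  assert (d7y' : lor4 (dy eta x y) (eta x y) = 0) by lra.
  assert (d1xx' : lor3 (dx (dx psi) x y) (psi x y) + lor3 (dx psi x y) (dx psi x y) = 0) by lra.
  assert (d1xy' : lor3 (dy (dx psi) x y) (psi x y) + lor3 (dx psi x y) (dy psi x y) = 0) by lra.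
  assert (d1yy' : lor3 (dy (dy psi) x y) (psi x y) + lor3 (dy psi x y) (dy psi x y) = 0) by lra.
  pose proof (rel2x4 Om (dx eta) eta eta (dx eta) 0 x y Ho Hxy
     ltac:(dfs Om) ltac:(dfs Om) ltac:(dfs Om) ltac:(dfs Om) R7x) as e3x.
  pose proof (rel2y4 Om (dy eta) eta eta (dy eta) 0 x y Ho Hxy
     ltac:(dfs Om) ltac:(dfs Om) ltac:(dfs Om) ltac:(dfs Om) R7y) as e3y.
  assert (k3h : lor4 (lap eta x y) (eta x y) + lor4 (dx eta x y) (dx eta x y) + lor4 (dy eta x y) (dy eta x y) = 0).
  { change (lap eta x y) with (vadd (dx (dx eta) x y) (dy (dy eta) x y)). rewrite lor4_add.
    rewrite (lor4_sym (eta x y) (dx (dx eta) x y)) in e3x. rewrite (lor4_sym (eta x y) (dy (dy eta) x y)) in e3y.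
    lra. }
  pose proof (rel2x3 Om (dx eta) psi eta (dx psi) 0 x y Ho Hxy
     ltac:(dfs Om) ltac:(dfs Om) ltac:(dfs Om) ltac:(dfs Om) R6x) as e4x.
  pose proof (rel2y3 Om (dy eta) psi eta (dy psi) 0 x y Ho Hxy
     ltac:(dfs Om) ltac:(dfs Om) ltac:(dfs Om) ltac:(dfs Om) R6y) as e4y.
  assert (k4h : lor3 (lap eta x y) (psi x y) + 2 * lor3 (dx eta x y) (dx psi x y) + 2 * lor3 (dy eta x y) (dy psi x y)
                + lor3 (eta x y) (vadd (dx (dx psi) x y) (dy (dy psi) x y)) = 0).
  { change (lap eta x y) with (vadd (dx (dx eta) x y) (dy (dy eta) x y)). rewrite lor3_add.
    rewrite (lor3_sym (eta x y)), lor3_add, (lor3_sym (dx (dx psi) x y)), (lor3_sym (dy (dy psi) x y)).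
    lra. }
  assert (DLx : forall i, (i < 4)%nat -> dx (lap psi) x y i = dx (dx (dx psi)) x y i + dx (dy (dy psi)) x y i).
  { intros i Hi. change (dx (lap psi) x y i) with (Derive (fun t => dx (dx psi) t y i + dy (dy psi) t y i) x).
    rewrite Derive_plus. reflexivity.
    - apply (smv_dfx Om (dx (dx psi))); auto. smvs.
    - apply (smv_dfx Om (dy (dy psi))); auto. smvs. }
  assert (DLy : forall i, (i < 4)%nat -> dy (lap psi) x y i = dy (dx (dx psi)) x y i + dy (dy (dy psi)) x y i).
  { intros i Hi. change (dy (lap psi) x y i) with (Derive (fun t => dx (dx psi) x t i + dy (dy psi) x t i) y).
    rewrite Derive_plus. reflexivity.
    - apply (smv_dfy Om (dx (dx psi))); auto. smvs.
    - apply (smv_dfy Om (dy (dy psi))); auto. smvs. }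
  assert (S3x : forall i, (i < 4)%nat -> dy (dy (dx psi)) x y i = dx (dy (dy psi)) x y i).
  { intros i Hi. change (dy (dy (dx psi)) x y i) with (Derive (fun t => dy (dx psi) x t i) y).
    rewrite (Derive_ext_loc (fun t => dy (dx psi) x t i) (fun t => dx (dy psi) x t i)).
    2: { generalize (loc_y Om x y Ho Hxy); apply filter_imp; intros t Ht; apply Sxy; auto. }
    change (Derive (fun t => dx (dy psi) x t i) y) with (dy (dx (dy psi)) x y i).
    apply (smv_schwarz Om (dy psi) x y Ho ltac:(smvs) Hxy i Hi). }
  assert (S3y : forall i, (i < 4)%nat -> dx (dx (dy psi)) x y i = dy (dx (dx psi)) x y i).
  { intros i Hi. change (dx (dx (dy psi)) x y i) with (Derive (fun t => dx (dy psi) t y i) x).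
    rewrite (Derive_ext_loc (fun t => dx (dy psi) t y i) (fun t => dy (dx psi) t y i)).
    2: { generalize (loc_x Om x y Ho Hxy); apply filter_imp; intros t Ht; symmetry; apply Sxy; auto. }
    change (Derive (fun t => dy (dx psi) t y i) x) with (dx (dy (dx psi)) x y i).
    symmetry. apply (smv_schwarz Om (dx psi) x y Ho ltac:(smvs) Hxy i Hi). }
  pose proof (rel2x4 Om (dx eta) (dx psi) eta (dx (dx psi)) 0 x y Ho Hxy
     ltac:(dfs Om) ltac:(dfs Om) ltac:(dfs Om) ltac:(dfs Om) R4x) as e1.
  pose proof (rel2y4 Om (dy eta) (dx psi) eta (dy (dx psi)) 0 x y Ho Hxy
     ltac:(dfs Om) ltac:(dfs Om) ltac:(dfs Om) ltac:(dfs Om) R4y) as e2.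
  pose proof (rel2x4m Om (lap psi) eta (dx psi) (dx psi) 0 x y Ho Hxy
     (dfx_lap Om psi x y sP Hxy) ltac:(dfs Om) ltac:(dfs Om) ltac:(dfs Om) H8) as e3.
  rewrite (lor4_ext_l (eta x y) (dx (lap psi) x y) (vadd (dx (dx (dx psi)) x y) (dx (dy (dy psi)) x y)) DLx) in e3.
  rewrite lor4_add in e3.
  rewrite (lor4_ext (eta x y) (dy (dy (dx psi)) x y) (dx (dy (dy psi)) x y) S3x) in e2.
  change (lap psi x y) with (vadd (dx (dx psi) x y) (dy (dy psi) x y)) in e3.
  assert (k1h : lor4 (lap eta x y) (dx psi x y) = -2 * lor4 (dx eta x y) (dx (dx psi) x y)
     - 2 * lor4 (dy eta x y) (dy (dx psi) x y) - 2 * lor4 (dx (dx psi) x y) (dx psi x y)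
     + lor4 (vadd (dx (dx psi) x y) (dy (dy psi) x y)) (dx eta x y)).
  { change (lap eta x y) with (vadd (dx (dx eta) x y) (dy (dy eta) x y)). rewrite lor4_add.
    rewrite (lor4_sym (eta x y) (dx (dx (dx psi)) x y)), (lor4_sym (eta x y) (dx (dy (dy psi)) x y)) in *.
    rewrite (lor4_sym (dx psi x y) (dx (dx psi) x y)) in e3. lra. }
  pose proof (rel2x4 Om (dx eta) (dy psi) eta (dx (dy psi)) 0 x y Ho Hxy
     ltac:(dfs Om) ltac:(dfs Om) ltac:(dfs Om) ltac:(dfs Om) R5x) as f1.
  pose proof (rel2y4 Om (dy eta) (dy psi) eta (dy (dy psi)) 0 x y Ho Hxy
     ltac:(dfs Om) ltac:(dfs Om) ltac:(dfs Om) ltac:(dfs Om) R5y) as f2.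
  pose proof (rel2y4m Om (lap psi) eta (dx psi) (dx psi) 0 x y Ho Hxy
     (dfy_lap Om psi x y sP Hxy) ltac:(dfs Om) ltac:(dfs Om) ltac:(dfs Om) H8) as f3.
  rewrite (lor4_ext_l (eta x y) (dy (lap psi) x y) (vadd (dy (dx (dx psi)) x y) (dy (dy (dy psi)) x y)) DLy) in f3.
  rewrite lor4_add in f3.
  rewrite (lor4_ext (eta x y) (dx (dx (dy psi)) x y) (dy (dx (dx psi)) x y) S3y) in f1.
  rewrite (lor4_ext (dx eta x y) (dx (dy psi) x y) (dy (dx psi) x y)) in f1
    by (intros; symmetry; apply Sxy; auto).
  change (lap psi x y) with (vadd (dx (dx psi) x y) (dy (dy psi) x y)) in f3.
  assert (k2h : lor4 (lap eta x y) (dy psi x y) = -2 * lor4 (dx eta x y) (dy (dx psi) x y)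
     - 2 * lor4 (dy eta x y) (dy (dy psi) x y) - 2 * lor4 (dy (dx psi) x y) (dx psi x y)
     + lor4 (vadd (dx (dx psi) x y) (dy (dy psi) x y)) (dy eta x y)).
  { change (lap eta x y) with (vadd (dx (dx eta) x y) (dy (dy eta) x y)). rewrite lor4_add.
    rewrite (lor4_sym (eta x y) (dy (dx (dx psi)) x y)), (lor4_sym (eta x y) (dy (dy (dy psi)) x y)) in *.
    rewrite (lor4_sym (dx psi x y) (dy (dx psi) x y)) in f3. lra. }
  pose proof (core (psi x y) (dx psi x y) (dy psi x y) (dx (dx psi) x y) (dy (dx psi) x y) (dy (dy psi) x y)
    (eta x y) (dx eta x y) (dy eta x y) (lap eta x y) c5 n5 c1 (eq_sym c3) c4 n1 n2 n3 n4 h8 ltac:(lra) ltac:(lra)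
    d2x' d2y' d3x d3y d4x d4y d5x d5y d6x d6y d7x' d7y' d1xx' d1xy' d1yy' k1h k2h k3h k4h) as CORE.
  cbv zeta in CORE. destruct CORE as [Charm [CQ1 CQ2]].
  assert (Gx_all : forall a b, Om a b -> forall j, (j < 4)%nat -> dx (hypGauss psi eta) a b j =
     ((dx eta a b j + dx psi a b j) * eta a b 3%nat - (eta a b j + psi a b j) * dx eta a b 3%nat) / (eta a b 3%nat) ^ 2).
  { intros a b Hab j Hj. destruct (Hn a b Hab) as [_ [_ [_ [_ Hu]]]].
    change (dx (hypGauss psi eta) a b j) with (Derive (fun t => (eta t b j + psi t b j) / eta t b 3%nat) a).
    rewrite q1; [reflexivity | exact (smv_dfx Om eta a b sE Hab j Hj) | exact (smv_dfx Om psi a b sP Hab j Hj)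
      | exact (smv_dfx Om eta a b sE Hab 3%nat ltac:(lia)) | lra]. }
  assert (Gy_all : forall a b, Om a b -> forall j, (j < 4)%nat -> dy (hypGauss psi eta) a b j =
     ((dy eta a b j + dy psi a b j) * eta a b 3%nat - (eta a b j + psi a b j) * dy eta a b 3%nat) / (eta a b 3%nat) ^ 2).
  { intros a b Hab j Hj. destruct (Hn a b Hab) as [_ [_ [_ [_ Hu]]]].
    change (dy (hypGauss psi eta) a b j) with (Derive (fun t => (eta a t j + psi a t j) / eta a t 3%nat) b).
    rewrite q1; [reflexivity | exact (smv_dfy Om eta a b sE Hab j Hj) | exact (smv_dfy Om psi a b sP Hab j Hj)
      | exact (smv_dfy Om eta a b sE Hab 3%nat ltac:(lia)) | lra]. }
  assert (Gxx : forall j, (j < 4)%nat -> dx (dx (hypGauss psi eta)) x y j =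
     (((dx (dx eta) x y j + dx (dx psi) x y j) * eta x y 3%nat + (dx eta x y j + dx psi x y j) * dx eta x y 3%nat
      - (dx eta x y j + dx psi x y j) * dx eta x y 3%nat - (eta x y j + psi x y j) * dx (dx eta) x y 3%nat) * eta x y 3%nat
     - 2 * dx eta x y 3%nat * ((dx eta x y j + dx psi x y j) * eta x y 3%nat - (eta x y j + psi x y j) * dx eta x y 3%nat))
     / (eta x y 3%nat) ^ 3).
  { intros j Hj. change (dx (dx (hypGauss psi eta)) x y j) with (Derive (fun t => dx (hypGauss psi eta) t y j) x).
    rewrite (Derive_ext_loc _ (fun t => ((dx eta t y j + dx psi t y j) * eta t y 3%nat
                 - (eta t y j + psi t y j) * dx eta t y 3%nat) / (eta t y 3%nat) ^ 2)).
    2: { generalize (loc_x Om x y Ho Hxy); apply filter_imp; intros t Ht; apply Gx_all; auto. }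
    refine (eq_trans (q2 (fun t => eta t y j) (fun t => psi t y j) (fun t => eta t y 3%nat)
                (fun t => dx eta t y j) (fun t => dx psi t y j) (fun t => dx eta t y 3%nat) x _ _ _ _ _ _ _) _);
      [exact (smv_dfx Om eta x y sE Hxy j Hj) | exact (smv_dfx Om psi x y sP Hxy j Hj)
      | exact (smv_dfx Om eta x y sE Hxy 3%nat ltac:(lia))
      | exact (smv_dfx Om (dx eta) x y (smv_dx Om eta sE) Hxy j Hj)
      | exact (smv_dfx Om (dx psi) x y (smv_dx Om psi sP) Hxy j Hj)
      | exact (smv_dfx Om (dx eta) x y (smv_dx Om eta sE) Hxy 3%nat ltac:(lia)) | lra | reflexivity]. }
  assert (Gyy : forall j, (j < 4)%nat -> dy (dy (hypGauss psi eta)) x y j =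
     (((dy (dy eta) x y j + dy (dy psi) x y j) * eta x y 3%nat + (dy eta x y j + dy psi x y j) * dy eta x y 3%nat
      - (dy eta x y j + dy psi x y j) * dy eta x y 3%nat - (eta x y j + psi x y j) * dy (dy eta) x y 3%nat) * eta x y 3%nat
     - 2 * dy eta x y 3%nat * ((dy eta x y j + dy psi x y j) * eta x y 3%nat - (eta x y j + psi x y j) * dy eta x y 3%nat))
     / (eta x y 3%nat) ^ 3).
  { intros j Hj. change (dy (dy (hypGauss psi eta)) x y j) with (Derive (fun t => dy (hypGauss psi eta) x t j) y).
    rewrite (Derive_ext_loc _ (fun t => ((dy eta x t j + dy psi x t j) * eta x t 3%nat
                 - (eta x t j + psi x t j) * dy eta x t 3%nat) / (eta x t 3%nat) ^ 2)).
    2: { generalize (loc_y Om x y Ho Hxy); apply filter_imp; intros t Ht; apply Gy_all; auto. }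
    refine (eq_trans (q2 (fun t => eta x t j) (fun t => psi x t j) (fun t => eta x t 3%nat)
                (fun t => dy eta x t j) (fun t => dy psi x t j) (fun t => dy eta x t 3%nat) y _ _ _ _ _ _ _) _);
      [exact (smv_dfy Om eta x y sE Hxy j Hj) | exact (smv_dfy Om psi x y sP Hxy j Hj)
      | exact (smv_dfy Om eta x y sE Hxy 3%nat ltac:(lia))
      | exact (smv_dfy Om (dy eta) x y (smv_dy Om eta sE) Hxy j Hj)
      | exact (smv_dfy Om (dy psi) x y (smv_dy Om psi sP) Hxy j Hj)
      | exact (smv_dfy Om (dy eta) x y (smv_dy Om eta sE) Hxy 3%nat ltac:(lia)) | lra | reflexivity]. }
  assert (Hu0 : eta x y 3%nat <> 0) by lra.
  split.
  - intros i Hi.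
    assert (LGe : forall j, (j < 4)%nat -> lap (hypGauss psi eta) x y j =
      (fun j => (lap eta x y j + (dx (dx psi) x y j + dy (dy psi) x y j)) / eta x y 3%nat
        - 2 * ((dx eta x y j + dx psi x y j) * dx eta x y 3%nat + (dy eta x y j + dy psi x y j) * dy eta x y 3%nat)
          / eta x y 3%nat ^ 2
        - (eta x y j + psi x y j) * lap eta x y 3%nat / eta x y 3%nat ^ 2
        + 2 * (eta x y j + psi x y j) * (dx eta x y 3%nat ^ 2 + dy eta x y 3%nat ^ 2) / eta x y 3%nat ^ 3) j).
    { intros j Hj.
      change (lap (hypGauss psi eta) x y j) with (dx (dx (hypGauss psi eta)) x y j + dy (dy (hypGauss psi eta)) x y j).
      rewrite (Gxx j Hj), (Gyy j Hj). unfold lap. field. auto. }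
    rewrite (lor3_ext_l (hypGauss psi eta x y) _ _ LGe), (LGe i ltac:(lia)).
    exact (Charm i Hi).
  - rewrite lor3C_dz. unfold abreschQ, hopf. rewrite lor4C_dz, (HH x y Hxy).
    set (GxF := fun j => ((dx eta x y j + dx psi x y j) * eta x y 3%nat - (eta x y j + psi x y j) * dx eta x y 3%nat)
                         / eta x y 3%nat ^ 2).
    set (GyF := fun j => ((dy eta x y j + dy psi x y j) * eta x y 3%nat - (eta x y j + psi x y j) * dy eta x y 3%nat)
                         / eta x y 3%nat ^ 2).
    assert (EX : forall j, (j < 4)%nat -> dx (hypGauss psi eta) x y j = GxF j) by (intros; apply Gx_all; auto).
    assert (EY : forall j, (j < 4)%nat -> dy (hypGauss psi eta) x y j = GyF j) by (intros; apply Gy_all; auto).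
    rewrite !(lor3_ext_l _ _ _ EX), !(lor3_ext_l _ _ _ EY), !(lor3_ext _ _ _ EX), !(lor3_ext _ _ _ EY).
    unfold dz. apply injective_projections; simpl.
    + unfold GxF, GyF. lra.
    + rewrite (lor3_sym GyF GxF). unfold GxF, GyF. lra.
Qed.

Theorem mainTheorem4 (Om : R -> R -> Prop) (psi eta : R -> R -> vec) :
  open2 Om -> connected2 Om ->
  conformal_immersion_H2xR Om psi ->
  not_locally_constant Om (fun x y => psi x y 3%nat) ->
  canonical_unit_normal Om psi eta ->
  (forall x y, Om x y -> meanH psi eta x y = 1 / 2) ->
  harmonic_H2 Om (hypGauss psi eta) /\
  (forall x y, Om x y ->
     lor3C (dz (hypGauss psi eta) x y) (dz (hypGauss psi eta) x y)
     = (- abreschQ psi eta x y)%C).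
Proof.
  intros Ho Hcn [sP Hconf] Hnlc [sE Hnorm] HH.
  split.
  - intros x y Hxy. exact (proj1 (point Om psi eta x y Ho sP sE Hconf Hnorm HH Hxy)).
  - intros x y Hxy. exact (proj2 (point Om psi eta x y Ho sP sE Hconf Hnorm HH Hxy)).
Qed.
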